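(* Let $n\ge2$, $\xi_n=\frac{n+1}{n-1}$, $\rho\in\mathbb{C}\setminus\{-\xi_n,-1,1,\xi_n\}$, $z_k\in\mathbb{C}\setminus\{0\}$, and let $\mu_k\in\mathbb{C}$ satisfy $z_k=\exp(i\mu_k)$. Then: (i) $z_k$ is a type-1 zero of $p_{2n}(\rho,z)$ iff $z_k\neq\pm1$ (i.e. $\mu_k\notin\pi\mathbb{Z}$) and $$\sin\frac{\mu_k(n+1)}{2}-\rho\sin\frac{\mu_k(n-1)}{2}=0.$$ In this case the corresponding type-1 eigenvalue is $$\lambda_k=\frac{1-\rho^2}{1-2\rho\cos\mu_k+\rho^2}=-\frac{\sin(n\mu_k)}{\sin\mu_k},$$ and the vector $\mathbf{y}_k$ with entries $y_{kj}=\sin\left[\mu_k\left(j-\frac{n-1}{2}\right)\right]$, $j=0,1,\dots,n-1$, is an eigenvector of $K_n(\rho)$ for $\lambda_k$. (ii) $z_k$ is a type-2 zero of $p_{2n}(\rho,z)$ iff $z_k\neq\pm1$ (i.e. $\mu_k\notin\pi\mathbb{Z}$) and $$\cos\frac{\mu_k(n+1)}{2}-\rho\cos\frac{\mu_k(n-1)}{2}=0.$$ In this case the corresponding type-2 eigenvalue is $$\lambda_k=\frac{1-\rho^2}{1-2\rho\cos\mu_k+\rho^2}=\frac{\sin(n\mu_k)}{\sin\mu_k},$$ and the vector $\mathbf{y}_k$ with entries $y_{kj}=\cos\left[\mu_k\left(j-\frac{n-1}{2}\right)\right]$, $j=0,1,\dots,n-1$, is an eigenvector of $K_n(\rho)$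 for $\lambda_k$.
   Context: $K_n(\rho)=\left[\rho^{|j-k|}\right]_{j,k=1}^n$ (with $\rho^0=1$). $p_{2n}(\rho,z)=z^{2n}+(1+\rho^2)\sum_{k=1}^{n-1}z^{2k}-2\rho\sum_{k=0}^{n-1}z^{2k+1}+1$; $s_{n+1}(\rho,z)=z^{n+1}-\rho z^n+\rho z-1$; $c_{n+1}(\rho,z)=z^{n+1}-\rho z^n-\rho z+1$. For such $\rho$, a zero $z$ of $p_{2n}(\rho,\cdot)$ is a type-1 zero if $s_{n+1}(\rho,z)=s_{n+1}(\rho,z^{-1})=0$ and a type-2 zero if $c_{n+1}(\rho,z)=c_{n+1}(\rho,z^{-1})=0$; every zero is of exactly one type. The eigenvalue corresponding to a zero $z$ is $\frac{z(1-\rho^2)}{(z-\rho)(1-\rho z)}$, and it is called type-1 or type-2 according to the type of $z$. *)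

(* Defs.v *)
From HB Require Import structures.
From mathcomp Require Import all_boot all_order all_algebra.
From mathcomp Require Import all_classical all_reals all_analysis.
From mathcomp Require Import complex.
Set Implicit Arguments. Unset Strict Implicit. Unset Printing Implicit Defensive.
Import Order.TTheory GRing.Theory Num.Theory.
Local Open Scope ring_scope.
Local Open Scope complex_scope.

Section Defs.
Variable R : realType.
Local Notation C := R[i].

Definition iC : C := Complex 0 1.

Definition cexp (w : C) : C :=
  (expR (complex.Re w))%:C * ((cos (complex.Im w))%:C + iC * (sin (complex.Im w))%:C).
Definition csin (w : C) : C := (cexp (iC * w) - cexp (- (iC * w))) / (2%:R * iC).
Definition ccos (w : C) : C := (cexp (iC * w) + cexp (- (iC * w))) / 2%:R.

Definition Kmat (n : nat) (rho : C) : 'M[C]_n :=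
  \matrix_(j < n, k < n) rho ^+ (maxn j k - minn j k).

Definition p2n (n : nat) (rho z : C) : C :=
  z ^+ (2 * n) + (1 + rho ^+ 2) * (\sum_(1 <= k < n) z ^+ (2 * k))
  - 2%:R * rho * (\sum_(0 <= k < n) z ^+ (2 * k + 1)) + 1.

Definition s_poly (n : nat) (rho z : C) : C :=
  z ^+ n.+1 - rho * z ^+ n + rho * z - 1.
Definition c_poly (n : nat) (rho z : C) : C :=
  z ^+ n.+1 - rho * z ^+ n - rho * z + 1.

Definition type1_zero (n : nat) (rho z : C) : Prop :=
  p2n n rho z = 0 /\ s_poly n rho z = 0 /\ s_poly n rho z^-1 = 0.
Definition type2_zero (n : nat) (rho z : C) : Prop :=
  p2n n rho z = 0 /\ c_poly n rho z = 0 /\ c_poly n rho z^-1 = 0.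

Definition eig_of_zero (rho z : C) : C :=
  z * (1 - rho ^+ 2) / ((z - rho) * (1 - rho * z)).

Definition is_eigenvector (n : nat) (A : 'M[C]_n) (lam : C) (y : 'cV[C]_n) : Prop :=
  y != 0 /\ A *m y = lam *: y.

Definition xi (n : nat) : C := n.+1%:R / (n.-1)%:R.

End Defs.

(* Main.v *)
Set Warnings "-all".
Require Import Defs.
From HB Require Import structures.
From mathcomp Require Import all_boot all_order all_algebra.
From mathcomp Require Import all_classical all_reals all_analysis.
From mathcomp Require Import complex.
From mathcomp Require Import ring lra.
Import Order.TTheory GRing.Theory Num.Theory.
Local Open Scope ring_scope.
Local Open Scope complex_scope.
Section S.
Variable R : realType.
Local Notation C := R[i].

Lemma cexpD (a b : C) : cexp (a + b) = cexp a * cexp b.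
Proof.
case: a => a1 a2; case: b => b1 b2.
rewrite /cexp /iC /= expRD cosD sinD.
by apply/eqP; rewrite eq_complex /=; apply/andP; split; apply/eqP; ring.
Qed.

Lemma cexp0 : cexp (0 : C) = 1.
Proof.
rewrite /cexp /iC /= expR0 cos0 sin0.
by apply/eqP; rewrite eq_complex /=; apply/andP; split; apply/eqP; ring.
Qed.

Lemma cexp_neq0 (a : C) : cexp a != 0.
Proof.
apply/eqP => h; have := cexpD a (-a); rewrite subrr cexp0 h mul0r.
by move/eqP; rewrite oner_eq0.
Qed.

Lemma cexpN (a : C) : cexp (- a) = (cexp a)^-1.
Proof.
have h := cexpD a (-a); rewrite subrr cexp0 in h.
by apply: (mulfI (cexp_neq0 a)); rewrite -h mulfV ?cexp_neq0.
Qed.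

Lemma cexpMn (a : C) k : cexp (a *+ k) = cexp a ^+ k.
Proof. by elim: k => [|k IH]; rewrite ?mulr0n ?cexp0 // mulrS cexpD IH exprS. Qed.

Lemma geom (x : C) a b : (a <= b)%N ->
  (x - 1) * \sum_(a <= k < b) x ^+ k = x ^+ b - x ^+ a.
Proof.
move=> ab; rewrite mulr_sumr.
under eq_bigr => k _ do rewrite mulrBl mul1r -exprS.
by rewrite telescope_sumr.
Qed.

Lemma p2n_fact n (rho z : C) : (1 <= n)%N ->
  (z ^+ 2 - 1) * p2n n rho z = s_poly n rho z * c_poly n rho z.
Proof.
move=> n1; rewrite /p2n /s_poly /c_poly.
have e1 : \sum_(1 <= k < n) z ^+ (2 * k) = \sum_(1<=k<n) (z^+2)^+k.
  by apply eq_bigr => k _; rewrite exprM.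
have e2 : \sum_(0 <= k < n) z ^+ (2 * k + 1) = z * \sum_(0<=k<n) (z^+2)^+k.
  by rewrite mulr_sumr; apply eq_bigr => k _; rewrite exprD exprM expr1 mulrC.
have g1 := @geom (z^+2) 1 n n1; have g0 := @geom (z^+2) 0 n (leq0n n).
rewrite e1 e2; move: g1 g0.
set S1 := \sum_(1 <= k < n) _; set S0 := \sum_(0 <= k < n) _.
rewrite expr1 expr0 -!exprM mul2n -addnn exprD [z ^+ n.+1]exprS.
set Zn := z ^+ n => g1 g0.
apply/eqP; rewrite -subr_eq0; apply/eqP.
clearbody S1 S0 Zn. transitivity ((1 + rho^+2) * ((z^+2 - 1) * S1 - (Zn * Zn - z^+2)) - 2%:R * rho * z * ((z^+2 - 1) * S0 - (Zn * Zn - 1))); first by ring.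
by rewrite g1 g0 !subrr; ring.
Qed.

Lemma Ksum n (rho x : C) (j : nat) : (j < n)%N ->
  (x - rho) * (1 - rho * x) *
    (\sum_(k < n) rho ^+ (maxn j k - minn j k) * x ^+ k) =
  x * (1 - rho ^+ 2) * x ^+ j - rho ^+ j.+1 * (1 - rho * x)
  - rho ^+ (n - j) * x ^+ n * (x - rho).
Proof.
move=> jn.
rewrite -(big_mkord xpredT (fun k => rho ^+ (maxn j k - minn j k) * x ^+ k)).
rewrite (big_cat_nat (leq0n j.+1) jn) /=.
have E1 : \sum_(0 <= k < j.+1) rho ^+ (maxn j k - minn j k) * x ^+ k =
          \sum_(0 <= k < j.+1) rho ^+ (j - k) * x ^+ k.
  apply: eq_big_nat => k /andP[_ hk].
  have hk' : (k <= j)%N := hk; by rewrite (maxn_idPl hk') (minn_idPr hk').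
have E2 : \sum_(j.+1 <= k < n) rho ^+ (maxn j k - minn j k) * x ^+ k =
          \sum_(j.+1 <= k < n) rho ^+ (k - j) * x ^+ k.
  apply: eq_big_nat => k /andP[hk _].
  by rewrite (maxn_idPr (ltnW hk)) (minn_idPl (ltnW hk)).
have G1 : (x - rho) * \sum_(0 <= k < j.+1) rho ^+ (j - k) * x ^+ k
          = x ^+ j.+1 - rho ^+ j.+1.
  have := telescope_sumr (fun k => rho ^+ (j.+1 - k) * x ^+ k) (leq0n j.+1).
  rewrite subn0 subnn expr0 mul1r mulr1 => <-.
  rewrite mulr_sumr; apply: eq_big_nat => k /andP[_ hk].
  have hk' : (k <= j)%N := hk; rewrite subSS (subSn hk') !exprS; ring.
have G2 : (1 - rho * x) * \sum_(j.+1 <= k < n) rho ^+ (k - j) * x ^+ k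
          = rho * x ^+ j.+1 - rho ^+ (n - j) * x ^+ n.
  have := telescope_sumr (fun k => - (rho ^+ (k - j) * x ^+ k)) jn.
  rewrite subSn // subnn expr1 => H.
  transitivity (- (rho ^+ (n - j) * x ^+ n) - - (rho * x ^+ j.+1)); last by ring.
  rewrite -H.
  rewrite mulr_sumr; apply: eq_big_nat => k /andP[hk _].
  rewrite (subSn (ltnW hk)) !exprS; ring.
rewrite E1 E2; move: G1 G2.
set S1 := \sum_(0 <= k < j.+1) _; set S2 := \sum_(j.+1 <= k < n) _.
set Pn := rho ^+ (n - j); set Xn := x ^+ n; rewrite !exprS.
set Xj := x ^+ j; set Pj := rho ^+ j => G1 G2.
clearbody S1 S2 Pn Xn Xj Pj.
apply/eqP; rewrite -subr_eq0; apply/eqP.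
transitivity ((1 - rho * x) * ((x - rho) * S1 - (x * Xj - rho * Pj))
   + (x - rho) * ((1 - rho * x) * S2 - (rho * (x * Xj) - Pn * Xn))); first by ring.
by rewrite G1 G2 !subrr; ring.
Qed.

Lemma cexp_half (mu : C) k : cexp (iC R * (mu * k%:R / 2%:R)) = cexp (iC R * mu / 2%:R) ^+ k.
Proof. by rewrite -cexpMn -mulr_natr; congr cexp; ring. Qed.

Lemma csinE (x : C) : csin x = (cexp (iC R * x) - (cexp (iC R * x))^-1) / (2%:R * iC R).
Proof. by rewrite /csin cexpN. Qed.
Lemma ccosE (x : C) : ccos x = (cexp (iC R * x) + (cexp (iC R * x))^-1) / 2%:R.
Proof. by rewrite /ccos cexpN. Qed.

Lemma s_inv n (rho z : C) : z != 0 -> s_poly n rho z^-1 = - s_poly n rho z / z ^+ n.+1.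
Proof.
move=> z0; rewrite /s_poly !exprVn [z ^+ n.+1]exprS.
have Zn0 : z ^+ n != 0 by rewrite expf_neq0.
move: Zn0; set Zn := z ^+ n => Zn0; by field; rewrite Zn0 z0.
Qed.
Lemma c_inv n (rho z : C) : z != 0 -> c_poly n rho z^-1 = c_poly n rho z / z ^+ n.+1.
Proof.
move=> z0; rewrite /c_poly !exprVn [z ^+ n.+1]exprS.
have Zn0 : z ^+ n != 0 by rewrite expf_neq0.
move: Zn0; set Zn := z ^+ n => Zn0; by field; rewrite Zn0 z0.
Qed.

Lemma p2n1 m (rho : C) : p2n m.+1 rho 1 = (m%:R * rho - m.+2%:R) * (rho - 1).
Proof.
rewrite /p2n.
under eq_bigr do rewrite expr1n.
under [X in _ - _ * _ * X]eq_bigr do rewrite expr1n.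
rewrite !sumr_const_nat expr1n subn1 subn0 succnK.
have -> : (1 *+ m = m%:R :> C) by [].
have -> : (1 *+ m.+1 = m%:R + 1 :> C) by rewrite mulrSr.
have -> : (m.+2%:R = m%:R + 2%:R :> C) by rewrite -addn2 natrD.
move: (m%:R : C) => M; ring.
Qed.
Lemma p2nm1 m (rho : C) : p2n m.+1 rho (-1) = (m%:R * rho + m.+2%:R) * (rho + 1).
Proof.
rewrite /p2n.
under eq_bigr do rewrite exprM sqrrN !expr1n.
under [X in _ - _ * _ * X]eq_bigr do rewrite exprD exprM sqrrN !expr1n expr1 mul1r.
rewrite !sumr_const_nat exprM sqrrN expr1n subn1 subn0 succnK.
have -> : (1 *+ m = m%:R :> C) by [].
rewrite expr1n.
have -> : (-1 *+ m.+1 = -(m%:R + 1) :> C) by rewrite mulNrn mulrSr.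
have -> : (m.+2%:R = m%:R + 2%:R :> C) by rewrite -addn2 natrD.
move: (m%:R : C) => M; ring.
Qed.

Definition sg (b : bool) : C := if b then 1 else -1.

Lemma eig_formula1 (rho z : C) : z != 0 ->
  eig_of_zero rho z = (1 - rho ^+ 2) / (1 - 2%:R * rho * ((z + z^-1) / 2%:R) + rho ^+ 2).
Proof.
move=> z0; rewrite /eig_of_zero.
have two0 : (2%:R : C) != 0 by rewrite pnatr_eq0.
set D := 1 - _ + _.
have -> : (z - rho) * (1 - rho * z) = z * D by rewrite /D; field.
have [->|D0] := eqVneq D 0; first by rewrite !mulr0 !invr0 !mulr0.
by field; rewrite D0 z0.
Qed.

Lemma eig_core (b : bool) (rho z Zn : C) : z != 0 -> z ^+ 2 != 1 -> z != rho ->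
  1 - rho * z != 0 -> Zn * (z - rho) = - sg b * (1 - rho * z) ->
  eig_of_zero rho z = sg b * (((Zn - Zn^-1) / (2%:R * iC R)) / ((z - z^-1) / (2%:R * iC R))).
Proof.
move=> z0 z21 zr rz HZ.
have two0 : (2%:R : C) != 0 by rewrite pnatr_eq0.
have i0 : iC R != 0 by apply/eqP => /eqP; rewrite eq_complex /= oner_eq0 andbF.
have zr' : z - rho != 0 by rewrite subr_eq0.
have ZnE : Zn = - sg b * (1 - rho * z) / (z - rho) by rewrite -HZ mulfK.
have z1 : z ^+ 2 - 1 != 0 by rewrite subr_eq0.
rewrite ZnE /eig_of_zero /sg; clear HZ ZnE; case: b => /=.
  by field; rewrite i0 z0 zr' rz -expr2 z1.
by field; rewrite i0 z0 zr' rz -expr2 z1.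
Qed.

Lemma eigvec_core (b : bool) n (rho z d : C) : (1 < n)%N -> z != 0 -> z ^+ 2 != 1 ->
  z != rho -> 1 - rho * z != 0 -> d != 0 ->
  z ^+ n * (z - rho) = - sg b * (1 - rho * z) ->
  is_eigenvector (Kmat n rho) (eig_of_zero rho z)
    (\col_(j < n) ((z ^+ j + sg b * (z ^+ n / z) * (z^-1) ^+ j) * d)).
Proof.
move=> n1 z0 z21 zr rz d0 HZ.
have zr' : z - rho != 0 by rewrite subr_eq0.
have z1 : z ^+ 2 - 1 != 0 by rewrite subr_eq0.
have Zn0 : z ^+ n != 0 by rewrite expf_neq0.
split.
  apply/eqP => /matrixP H.
  have n0 : (0 < n)%N by apply: ltnW.
  have H0 := H (Ordinal n0) ord0; have H1 := H (Ordinal n1) ord0.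
  rewrite !mxE /= !expr0 !expr1 ?mulr1 in H0 H1.
  move/eqP: H0; rewrite mulf_eq0 (negbTE d0) orbF => /eqP H0.
  move/eqP: H1; rewrite mulf_eq0 (negbTE d0) orbF => /eqP H1.
  move: z1; rewrite (_ : z ^+ 2 - 1 = z * (z + sg b * (z ^+ n / z) * z^-1) - (1 + sg b * (z ^+ n / z))).
    by rewrite H0 H1 mulr0 subrr eqxx.
  by field.
apply/matrixP => j k; rewrite !mxE.
under eq_bigr do rewrite !mxE.
set W := z ^+ n / z.
have -> : \sum_(k0 < n) rho ^+ (maxn j k0 - minn j k0) * ((z ^+ k0 + sg b * W * z^-1 ^+ k0) * d)
  = (\sum_(k0 < n) rho ^+ (maxn j k0 - minn j k0) * z ^+ k0
     + sg b * W * \sum_(k0 < n) rho ^+ (maxn j k0 - minn j k0) * z^-1 ^+ k0) * d.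
  rewrite mulr_sumr -big_split big_distrl /=; apply: eq_bigr => i _; ring.
have Kz := @Ksum n rho z j (ltn_ord j).
have Kx := @Ksum n rho z^-1 j (ltn_ord j).
move: Kz Kx.
set T1 := \sum_(k0 < n) _ * z ^+ k0.
set T2 := \sum_(k0 < n) _ * z^-1 ^+ k0.
rewrite !exprVn /W /eig_of_zero.
move: HZ Zn0.
set Zn := z ^+ n; set Zj := z ^+ j; set P := rho ^+ j.+1; set Q := rho ^+ (n - j).
have Zj0 : Zj != 0 by rewrite expf_neq0.
clearbody T1 T2 Zn Zj P Q => HZ Zn0 Kz Kx.
have T1E : T1 = (z * (1 - rho ^+ 2) * Zj - P * (1 - rho * z) - Q * Zn * (z - rho)) / ((z - rho) * (1 - rho * z)).
  by rewrite -Kz mulrC mulKf // mulf_neq0.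
have xr : z^-1 - rho != 0.
  rewrite (_ : z^-1 - rho = (1 - rho * z) / z); last by field.
  by rewrite mulf_neq0 // invr_eq0.
have rx : 1 - rho * z^-1 != 0.
  rewrite (_ : 1 - rho * z^-1 = (z - rho) / z); last by field.
  by rewrite mulf_neq0 // invr_eq0.
have T2E : T2 = (z^-1 * (1 - rho ^+ 2) * Zj^-1 - P * (1 - rho * z^-1) - Q * Zn^-1 * (z^-1 - rho)) / ((z^-1 - rho) * (1 - rho * z^-1)).
  by rewrite -Kx mulrC mulKf // mulf_neq0.
have ZnE : Zn = - sg b * (1 - rho * z) / (z - rho) by rewrite -HZ mulfK.
rewrite T1E T2E ZnE /sg; clear T1E T2E Kz Kx ZnE HZ Zn0; case: b => /=.
  by field; rewrite Zj0 z0 zr' rz.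
by field; rewrite Zj0 z0 zr' rz.
Qed.
End S.

Theorem theorem4p1 (R : realType) (n : nat) (rho z mu : R[i]) :
  (2 <= n)%N ->
  rho <> - xi R n -> rho <> -1 -> rho <> 1 -> rho <> xi R n ->
  z <> 0 ->
  z = cexp (iC R * mu) ->
  (* (i) type-1 zeros *)
  ((type1_zero n rho z <->
      (z <> 1 /\ z <> -1 /\
       csin (mu * n.+1%:R / 2%:R) - rho * csin (mu * n.-1%:R / 2%:R) = 0)) /\
   (type1_zero n rho z ->
      eig_of_zero rho z = (1 - rho ^+ 2) / (1 - 2%:R * rho * ccos mu + rho ^+ 2) /\
      eig_of_zero rho z = - (csin (n%:R * mu) / csin mu) /\
      is_eigenvector (Kmat n rho) (eig_of_zero rho z)
        (\col_(j < n) csin (mu * (j%:R - n.-1%:R / 2%:R))))) /\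
  (* (ii) type-2 zeros *)
  ((type2_zero n rho z <->
      (z <> 1 /\ z <> -1 /\
       ccos (mu * n.+1%:R / 2%:R) - rho * ccos (mu * n.-1%:R / 2%:R) = 0)) /\
   (type2_zero n rho z ->
      eig_of_zero rho z = (1 - rho ^+ 2) / (1 - 2%:R * rho * ccos mu + rho ^+ 2) /\
      eig_of_zero rho z = csin (n%:R * mu) / csin mu /\
      is_eigenvector (Kmat n rho) (eig_of_zero rho z)
        (\col_(j < n) ccos (mu * (j%:R - n.-1%:R / 2%:R))))).
Proof.
move=> n2 Hxm Hm1 H1 Hx /eqP z0 Hz.
case: n n2 Hxm Hx => [|[|m]] // _ Hxm Hx.
have two0 : (2%:R : R[i]) != 0 by rewrite pnatr_eq0.
have i0 : iC R != 0 by apply/eqP => /eqP; rewrite eq_complex /= oner_eq0 andbF.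
set h := iC R * mu / 2%:R.
have Ehalf : forall k, cexp (iC R * (mu * k%:R / 2%:R)) = cexp h ^+ k := fun k => @cexp_half R mu k.
have Hz2 : z = cexp h ^+ 2 by rewrite Hz -Ehalf; congr cexp; field.
have u0 : cexp h != 0 := @cexp_neq0 R h.
move: Ehalf Hz2 u0; set u := cexp h => Ehalf Hz2 u0.
set B := u ^+ m.+1.
have B0 : B != 0 by rewrite expf_neq0.
have Hzn : z ^+ m.+2 = B ^+ 2 * z.
  by rewrite Hz2 /B -!exprM -exprD mulnC mulSnr.
have cs1 : csin (mu * (m.+3)%:R / 2%:R) = (B * z - (B * z)^-1) / (2%:R * iC R).
  by rewrite csinE Ehalf Hz2 /B -exprD addn2.
have cs2 : csin (mu * (m.+1)%:R / 2%:R) = (B - B^-1) / (2%:R * iC R).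
  by rewrite csinE Ehalf.
have cc1 : ccos (mu * (m.+3)%:R / 2%:R) = (B * z + (B * z)^-1) / 2%:R.
  by rewrite ccosE Ehalf Hz2 /B -exprD addn2.
have cc2 : ccos (mu * (m.+1)%:R / 2%:R) = (B + B^-1) / 2%:R.
  by rewrite ccosE Ehalf.
have csn : csin ((m.+2)%:R * mu) = (B ^+ 2 * z - (B ^+ 2 * z)^-1) / (2%:R * iC R).
  have -> : (m.+2)%:R * mu = mu * (2 * m.+2)%:R / 2%:R by rewrite natrM; field.
  by rewrite csinE Ehalf exprM -Hz2 Hzn.
have csm : csin mu = (z - z^-1) / (2%:R * iC R).
  rewrite -[X in csin X](_ : mu * 2%:R / 2%:R = mu); last by field.
  by rewrite csinE Ehalf -Hz2.
have ccm : ccos mu = (z + z^-1) / 2%:R.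
  rewrite -[X in ccos X](_ : mu * 2%:R / 2%:R = mu); last by field.
  by rewrite ccosE Ehalf -Hz2.
have entry : forall j : nat, cexp (iC R * (mu * (j%:R - (m.+1)%:R / 2%:R))) = z ^+ j / B.
  move=> j.
  have -> : iC R * (mu * (j%:R - (m.+1)%:R / 2%:R)) =
     iC R * (mu * (2 * j)%:R / 2%:R) + - (iC R * (mu * (m.+1)%:R / 2%:R)).
    by rewrite natrM; field.
  by rewrite cexpD cexpN !Ehalf exprM -Hz2.
have hs : s_poly m.+2 rho z = z * (B ^+ 2 * z) - rho * (B ^+ 2 * z) + rho * z - 1.
  by rewrite /s_poly exprS Hzn.
have hc : c_poly m.+2 rho z = z * (B ^+ 2 * z) - rho * (B ^+ 2 * z) - rho * z + 1.
  by rewrite /c_poly exprS Hzn.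
have hcond_s : csin (mu * (m.+3)%:R / 2%:R) - rho * csin (mu * (m.+1)%:R / 2%:R)
    = s_poly m.+2 rho z / (2%:R * iC R * B * z).
  by rewrite cs1 cs2 hs; field; rewrite z0 B0 i0.
have hcond_c : ccos (mu * (m.+3)%:R / 2%:R) - rho * ccos (mu * (m.+1)%:R / 2%:R)
    = c_poly m.+2 rho z / (2%:R * B * z).
  by rewrite cc1 cc2 hc; field; rewrite z0 B0.
have hp : (z ^+ 2 - 1) * p2n m.+2 rho z = s_poly m.+2 rho z * c_poly m.+2 rho z.
  exact: p2n_fact.
have hp1 : p2n m.+2 rho 1 != 0.
  rewrite p2n1 mulf_neq0 //; last by rewrite subr_eq0; apply/eqP.
  apply/eqP => e; apply: Hx; rewrite /xi /=.
  move/eqP: e; rewrite subr_eq0 => /eqP <-.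
  by field; rewrite ?nat1r ?natr1 pnatr_eq0.
have hpm1 : p2n m.+2 rho (-1) != 0.
  rewrite p2nm1 mulf_neq0 //; last by rewrite addr_eq0; apply/eqP.
  apply/eqP => e; apply: Hxm; rewrite /xi /=.
  move/eqP: e; rewrite addr_eq0 => /eqP e.
  by rewrite -mulNr -e; field; rewrite ?nat1r ?natr1 pnatr_eq0.
have npm : p2n m.+2 rho z = 0 -> z != 1 /\ z != -1.
  by move=> P; split; apply/eqP => e; [move: hp1 | move: hpm1]; rewrite -e P eqxx.
have z21 : z != 1 -> z != -1 -> z ^+ 2 - 1 != 0.
  move=> a b; rewrite (_ : z ^+ 2 - 1 = (z - 1) * (z + 1)); last by ring.
  by rewrite mulf_neq0 // ?subr_eq0 ?addr_eq0.
have z21' : z != 1 -> z != -1 -> z ^+ 2 != 1.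
  by move=> a b; rewrite -subr_eq0 z21.
have Bz : B ^+ 2 * ((z - 1) * (z + 1)) == 0 -> z != 1 -> z != -1 -> False.
  have B20 : B ^+ 2 != 0 by rewrite expf_neq0.
  move=> + a b; rewrite !mulf_eq0 (negbTE B0) subr_eq0 addr_eq0.
  by rewrite (negbTE a) (negbTE b).
have rs_s : s_poly m.+2 rho z = 0 -> z != 1 -> z != -1 -> z != rho /\ 1 - rho * z != 0.
  rewrite hs => S a b; split.
    apply/eqP => e; move: S; rewrite e.
    rewrite (_ : _ - 1 = (rho - 1) * (rho + 1)); last by ring.
    move/eqP; rewrite mulf_eq0 subr_eq0 addr_eq0 => /orP[] /eqP //.
  apply/eqP => e; move: S.
  rewrite (_ : _ - 1 = B ^+ 2 * ((z - 1) * (z + 1)) + (1 - rho * z) * (B ^+ 2 - 1)); last by ring.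
  by rewrite e mul0r addr0 => /eqP /Bz; apply.
have rs_c : c_poly m.+2 rho z = 0 -> z != 1 -> z != -1 -> z != rho /\ 1 - rho * z != 0.
  rewrite hc => S a b; split.
    apply/eqP => e; move: S; rewrite e.
    rewrite (_ : _ + 1 = - ((rho - 1) * (rho + 1))); last by ring.
    move/eqP; rewrite oppr_eq0 mulf_eq0 subr_eq0 addr_eq0 => /orP[] /eqP //.
  apply/eqP => e; move: S.
  rewrite (_ : _ + 1 = B ^+ 2 * ((z - 1) * (z + 1)) + (1 - rho * z) * (B ^+ 2 + 1)); last by ring.
  by rewrite e mul0r addr0 => /eqP /Bz; apply.
split; split.
- split.
    case=> P [S Si]; have [a b] := npm P.
    split; first by apply/eqP.
    split; first by apply/eqP.
    by rewrite hcond_s S mul0r.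
  case=> /eqP a [/eqP b c].
  have S : s_poly m.+2 rho z = 0.
    move: c; rewrite hcond_s => /eqP; rewrite mulf_eq0 invr_eq0 => /orP[/eqP //|].
    by rewrite !mulf_eq0 ?(negbTE two0) ?(negbTE i0) ?(negbTE B0) ?(negbTE z0).
  split; last by split; rewrite ?s_inv // S ?oppr0 ?mul0r.
  apply/eqP; move: hp; rewrite S mul0r => /eqP; rewrite mulf_eq0 => /orP[|//].
  by rewrite (negbTE (z21 a b)).
- case=> P [S _]; have [a b] := npm P; have [zr rz] := rs_s S a b.
  split; first by rewrite ccm; exact: eig_formula1.
  have HZ : B ^+ 2 * z * (z - rho) = - sg R false * (1 - rho * z).
    move: S; rewrite hs /sg => S.
    by apply/eqP; rewrite -subr_eq0; apply/eqP; rewrite -S; ring.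
  split.
    by rewrite csn csm (@eig_core R false rho z (B ^+ 2 * z)) ?z21' // /sg mulN1r.
  have -> : \col_(j < m.+2) csin (mu * (j%:R - (m.+2).-1%:R / 2%:R)) =
     \col_(j < m.+2) ((z ^+ j + sg R false * (z ^+ m.+2 / z) * (z^-1) ^+ j)
                       * (2%:R * iC R * B)^-1).
    apply/matrixP => j k; rewrite !mxE csinE entry Hzn /sg exprVn.
    have Zj0 : z ^+ j != 0 by rewrite expf_neq0.
    by field; rewrite Zj0 B0 z0 i0.
  apply: eigvec_core => //; first by rewrite z21'.
    by rewrite invr_eq0 !mulf_neq0.
  by rewrite Hzn.
- split.
    case=> P [S Si]; have [a b] := npm P.
    split; first by apply/eqP.
    split; first by apply/eqP.
    by rewrite hcond_c S mul0r.
  case=> /eqP a [/eqP b c].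
  have S : c_poly m.+2 rho z = 0.
    move: c; rewrite hcond_c => /eqP; rewrite mulf_eq0 invr_eq0 => /orP[/eqP //|].
    by rewrite !mulf_eq0 ?(negbTE two0) ?(negbTE i0) ?(negbTE B0) ?(negbTE z0).
  split; last by split; rewrite ?c_inv // S ?mul0r.
  apply/eqP; move: hp; rewrite S mulr0 => /eqP; rewrite mulf_eq0 => /orP[|//].
  by rewrite (negbTE (z21 a b)).
- case=> P [S _]; have [a b] := npm P; have [zr rz] := rs_c S a b.
  split; first by rewrite ccm; exact: eig_formula1.
  have HZ : B ^+ 2 * z * (z - rho) = - sg R true * (1 - rho * z).
    move: S; rewrite hc /sg => S.
    by apply/eqP; rewrite -subr_eq0; apply/eqP; rewrite -S; ring.
  split.
    by rewrite csn csm (@eig_core R true rho z (B ^+ 2 * z)) ?z21' // /sg mul1r.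
  have -> : \col_(j < m.+2) ccos (mu * (j%:R - (m.+2).-1%:R / 2%:R)) =
     \col_(j < m.+2) ((z ^+ j + sg R true * (z ^+ m.+2 / z) * (z^-1) ^+ j)
                       * (2%:R * B)^-1).
    apply/matrixP => j k; rewrite !mxE ccosE entry Hzn /sg exprVn.
    have Zj0 : z ^+ j != 0 by rewrite expf_neq0.
    by field; rewrite Zj0 B0 z0.
  apply: eigvec_core => //; first by rewrite z21'.
    by rewrite invr_eq0 !mulf_neq0.
  by rewrite Hzn.
Qed.
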